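(* If $G$ is a diamond-necklace $N_k$ for some $k\ge 2$, then $m(G,2) = u(G)+1$ (that is, $m(N_k,2)=k+1$).
   Context: A diamond is a graph isomorphic to $K_4$ minus one edge. Diamond-necklace: for $k\ge 2$, take $k$ disjoint diamonds $D_1,\dots,D_k$ with $V(D_i)=\{a_i,b_i,c_i,d_i\}$ where $a_ib_i$ is the missing edge, and add the edges $a_ib_{i+1}$ for $i\in\{1,\dots,k-1\}$ and the edge $a_kb_1$; the result is $N_k$. For a connected claw-free cubic graph $G\ne K_4$, $V(G)$ is uniquely partitioned into sets inducing triangles or diamonds, called units; $u(G)$ is their number (for $N_k$, the units are the $k$ diamonds $D_i$). $r$-percolation: starting from a set $S$ of infected vertices, repeatedly infect any uninfected vertex having at least $r$ infected neighbors. $S$ is an $r$-percolating set if eventually all vertices are infected; $m(G,r)$ is the minimum cardinality of an $r$-percolating set of $G$. *)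

(* Defs.v *)
From mathcomp Require Import all_boot all_order.
Set Implicit Arguments. Unset Strict Implicit. Unset Printing Implicit Defensive.

(* Simple graphs: symmetric irreflexive relation on a finType. *)

Definition perc_step (T : finType) (e : rel T) (r : nat) (S : {set T}) : {set T} :=
  S :|: [set v | r <= #|[set w in S | e v w]|].

(* Final infected set: the process is monotone and stabilises within #|T| rounds. *)
Definition perc_closure (T : finType) (e : rel T) (r : nat) (S : {set T}) : {set T} :=
  iter #|T| (perc_step e r) S.

Definition percolating (T : finType) (e : rel T) (r : nat) (S : {set T}) : bool :=
  perc_closure e r S == [set: T].

(* m(G,r): minimum cardinality of an r-percolating set (V(G) itself percolates). *)
Definition m_perc (T : finType) (e : rel T) (r : nat) : nat :=
  \big[minn/#|T|]_(S : {set T} | percolating e r S) #|S|.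

(* Vertex (i, j): diamond D_i (0-based i < k), role j:
   0 = a_i, 1 = b_i, 2 = c_i, 3 = d_i.  Inside D_i all pairs are adjacent except
   a_i b_i; in addition a_i is adjacent to b_{i+1 mod k}. *)
Definition necklace_adj (k : nat) : rel ('I_k * 'I_4) :=
  fun x y =>
    let: (i, p) := x in let: (i', p') := y in
    ((i == i') && (p != p') && ~~ ([&& (p : nat) <= 1 & (p' : nat) <= 1]))
    || ([&& (p : nat) == 0, (p' : nat) == 1 & (i' : nat) == (i.+1 %% k)])
    || ([&& (p : nat) == 1, (p' : nat) == 0 & (i : nat) == (i'.+1 %% k)]).

Definition necklace_unit (k : nat) (i : 'I_k) : {set 'I_k * 'I_4} :=
  [set x | x.1 == i].

(* Main.v *)
Require Import Defs.
From mathcomp Require Import all_boot all_order.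
From mathcomp Require Import zify.

Section Gen.
Variables (T : finType) (e : rel T) (r : nat).

Lemma step_ext (A : {set T}) : A \subset perc_step e r A.
Proof. by apply/subsetP => x xA; rewrite /perc_step inE xA. Qed.

Lemma iter_fix (A : {set T}) m : perc_step e r A = A -> iter m (perc_step e r) A = A.
Proof. by move=> h; elim: m => //= m ->. Qed.

Lemma iter_stab n (A : {set T}) : #|T| <= n + #|A| ->
  perc_step e r (iter n (perc_step e r) A) = iter n (perc_step e r) A.
Proof.
elim: n A => [|n IH] A h.
  have -> : A = [set: T].
    by apply/eqP; rewrite eqEcard subsetT cardsT.
  by apply/eqP; rewrite eqEsubset subsetT step_ext.
rewrite iterSr.
have [fe|fne] := eqVneq (perc_step e r A) A.
  by rewrite fe !iter_fix.
apply: IH.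
have : A \proper perc_step e r A by rewrite properEneq eq_sym fne step_ext.
move/proper_card => H; apply: leq_trans h _; by rewrite addSnnS leq_add2l.
Qed.

Lemma perc_cl_closed (S : {set T}) v :
  r <= #|[set w in perc_closure e r S | e v w]| -> v \in perc_closure e r S.
Proof.
move=> h.
rewrite /perc_closure -(@iter_stab #|T| S) ?leq_addr //.
by rewrite /perc_step inE in_set h orbT.
Qed.

Lemma perc_cl_sub (S : {set T}) : S \subset perc_closure e r S.
Proof.
rewrite /perc_closure; elim: #|T| => //= n IH.
exact: subset_trans IH (step_ext _).
Qed.
End Gen.

Lemma nadj_sym k : symmetric (@necklace_adj k).
Proof.
move=> [i p] [i' p']; rewrite /necklace_adj.
rewrite (eq_sym i') (eq_sym p') (andbC (p' <= 1)).
case: (i == i'); case: (p != p'); case: (_ && _) => //=;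
by apply/orP/orP; case; move/and3P=> [-> -> ->]; rewrite ?orbT; auto.
Qed.

Lemma neqF_sym (T : eqType) (a b : T) : a != b -> (b == a) = false.
Proof. by rewrite eq_sym => /negbTE. Qed.

Lemma predmod n j : j < n.+1 -> (j.+1 %% n.+1 + n) %% n.+1 = j.
Proof.
move=> hj; case: (ltngtP j.+1 n.+1) => h.
- by rewrite (modn_small h) addSnnS modnDr modn_small; lia.
- lia.
- by rewrite h modnn add0n modn_small //; lia.
Qed.

Lemma nbr_sub k (v : 'I_k.+1 * 'I_4) : exists x y z,
  [set w | necklace_adj v w] \subset [set x; y; z].
Proof.
case: v => i [p hp].
have nb (j : nat) : (j < 4)%N -> exists q : 'I_4, q = j :> nat.
  by move=> hj; exists (Ordinal hj).
have [q0 e0] := nb 0 erefl.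
have [q1 e1] := nb 1 erefl.
have [q2 e2] := nb 2 erefl.
have [q3 e3] := nb 3 erefl.
have [p0|[p1|[p2|p3]]] : p = 0 \/ p = 1 \/ p = 2 \/ p = 3 by lia.
- exists (i, q2), (i, q3), (inord (i.+1 %% k.+1), q1).
  apply/subsetP => -[i' [p' hp']]; rewrite !inE /necklace_adj /= !xpair_eqE -!val_eqE /= ?e0 ?e1 ?e2 ?e3 inordK ?ltn_mod //.
  subst p; case: (eqVneq i i') => [->|ne]; [rewrite ?eqxx /=; lia |
  rewrite ?(negbTE ne) ?(neqF_sym ne) /=; lia].
- exists (i, q2), (i, q3), (inord ((i + k) %% k.+1), q0).
  apply/subsetP => -[i' [p' hp']]; rewrite !inE /necklace_adj /= !xpair_eqE -!val_eqE /= ?e0 ?e1 ?e2 ?e3 ?e0 ?e1 ?e2 ?e3 inordK ?ltn_mod //.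
  subst p. have := ltn_ord i'. move=> hi' /orP[/orP[H|]|/and3P[_ /eqP-> /eqP->]].
  + move: H; case: (eqVneq i i') => [->|ne]; [rewrite ?eqxx /=; lia |
    rewrite ?(negbTE ne) ?(neqF_sym ne) /=; lia].
  + by case/and3P.
  + by rewrite predmod // eqxx orbT.
- exists (i, q0), (i, q1), (i, q3).
  apply/subsetP => -[i' [p' hp']]; rewrite !inE /necklace_adj /= !xpair_eqE -!val_eqE /= ?e0 ?e1 ?e2 ?e3.
  subst p; case: (eqVneq i i') => [->|ne]; [rewrite ?eqxx /=; lia |
  rewrite ?(negbTE ne) ?(neqF_sym ne) /=; lia].
- exists (i, q0), (i, q1), (i, q2).
  apply/subsetP => -[i' [p' hp']]; rewrite !inE /necklace_adj /= !xpair_eqE -!val_eqE /= ?e0 ?e1 ?e2 ?e3.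
  subst p; case: (eqVneq i i') => [->|ne]; [rewrite ?eqxx /=; lia |
  rewrite ?(negbTE ne) ?(neqF_sym ne) /=; lia].
Qed.

Lemma ndeg k (v : 'I_k.+1 * 'I_4) : #|[set w | necklace_adj v w]| <= 3.
Proof.
have [x [y [z /subset_leq_card h]]] := @nbr_sub k v.
apply: leq_trans h _; rewrite cardsU cardsU1 !cards1; lia.
Qed.

Lemma cardsum (T : finType) (P : pred T) : #|[set w | P w]| = \sum_w P w.
Proof.
rewrite -sum1_card big_mkcond; apply: eq_bigr => w _; rewrite inE; by case: (P w).
Qed.

Lemma lower (T : finType) (e : rel T) (esym : symmetric e)
  (deg : forall v, #|[set w | e v w]| <= 3) (S : {set T}) :
  percolating e 2 S -> (exists u, u \notin S) -> #|T| < 4 * #|S|.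
Proof.
move=> /eqP perc [u uS].
pose f := perc_step e 2.
have exv : forall v, exists i, v \in iter i f S.
  by move=> v; exists #|T|; rewrite -/(perc_closure e 2 S) perc inE.
pose t v := ex_minn (exv v).
have tP v : v \in iter (t v) f S by rewrite /t; case: ex_minnP.
have tmin v i : v \in iter i f S -> t v <= i by rewrite /t; case: ex_minnP => m _ H /H.
have t0 v : (t v == 0) = (v \in S).
  apply/eqP/idP => [h| vS]; first by have := tP v; rewrite h.
  by apply/eqP; rewrite -leqn0 (tmin v 0).
pose inn v := \sum_w (e v w && (t w < t v)).
pose out v := \sum_w (e v w && (t v < t w)).
have degio v : inn v + out v <= 3.
  rewrite /inn /out -big_split /=; apply: leq_trans (deg v).
  rewrite cardsum; apply: leq_sum => w _.
  by case: (e v w) => //=; case: ltngtP.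
have inS v : v \in S -> inn v = 0.
  move=> vS; apply: big1 => w _; have := t0 v; rewrite vS => /eqP ->.
  by rewrite ltn0 andbF.
have innS v : v \notin S -> 2 <= inn v.
  move=> vS; have : t v != 0 by rewrite t0.
  case Et: (t v) => [//|i] _.
  have vi : v \notin iter i f S by apply/negP => /tmin; lia.
  have := tP v; rewrite Et /= {1}/f /perc_step inE (negbTE vi) /= inE => h.
  apply: leq_trans h _; rewrite /inn -cardsum.
  apply: subset_leq_card; apply/subsetP => w; rewrite !inE => /andP[wi ->] /=.
  by rewrite Et ltnS; exact: tmin.
have sum_eq : \sum_v inn v = \sum_v out v.
  rewrite /inn /out exchange_big /=; apply: eq_bigr => v _; apply: eq_bigr => w _.
  by rewrite esym.
case: (@arg_maxnP _ u predT t isT) => vs _ Hmax.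
have vsS : vs \notin S.
  rewrite -t0; have := Hmax u isT; have : t u != 0 by rewrite t0.
  lia.
have outvs : out vs = 0.
  by apply: big1 => w _; move: (Hmax w isT) => /= h; rewrite ltnNge h andbF.
have pw v : out v + 1 + (v == vs) <= inn v + 4 * (v \in S).
  case: (eqVneq v vs) => [->|nv].
    by rewrite outvs (negbTE vsS); have := innS vs vsS; lia.
  case vS: (v \in S).
    by have := inS v vS; have := degio v; lia.
  by have := innS v (negbT vS); have := degio v; lia.
have : \sum_v (out v + 1 + (v == vs)) <= \sum_v (inn v + 4 * (v \in S)).
  by apply: leq_sum => v _; exact: pw.
have h1 : \sum_v (v == vs : nat) = 1.
  by rewrite (bigD1 vs) //= eqxx big1 // => v /negPf ->.
have h2 : \sum_v (v \in S : nat) = #|S|.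
  by rewrite -cardsum; apply: eq_card => v; rewrite inE.
have h3 : \sum_(v : T) 1 = #|T| by rewrite sum1_card.
have h0 : \sum_(v : T) 0 = 0 by rewrite big1.
rewrite !big_split /= sum_eq h1 h2 h3 h0 -addnA leq_add2l.
rewrite addn1 => H; apply: leq_trans H _; rewrite !mulSn mul0n; exact: leqnn.
Qed.

Lemma nbr2 (T : finType) (e : rel T) (S : {set T}) v x y :
  x != y -> e v x -> e v y -> x \in perc_closure e 2 S -> y \in perc_closure e 2 S ->
  v \in perc_closure e 2 S.
Proof.
move=> nxy evx evy xC yC; apply: (@perc_cl_closed T e 2 S v).
have : [set x; y] \subset [set w in perc_closure e 2 S | e v w].
  by apply/subsetP => w; rewrite !inE => /orP[]/eqP->; rewrite ?xC ?yC ?evx ?evy.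
by move/subset_leq_card; rewrite cards2 nxy.
Qed.

Notation R n := (@Ordinal 4 n isT).

Lemma upper k : percolating (@necklace_adj k.+2) 2
   ((Ordinal (isT : 0 < k.+2), R 3) |: [set x | x.2 == R 2]).
Proof.
set S0 := _ |: _.
set C := perc_closure (@necklace_adj k.+2) 2 S0.
have inC x : x \in S0 -> x \in C by move=> h; apply: (subsetP (@perc_cl_sub _ _ 2 S0)).
have cC j (hj : j < k.+2) : (Ordinal hj, R 2) \in C by apply: inC; rewrite !inE eqxx orbT.
have key j (hj : j < k.+2) : [/\ (Ordinal hj, R 0) \in C, (Ordinal hj, R 1) \in C,
     (Ordinal hj, R 2) \in C & (Ordinal hj, R 3) \in C].
  elim: j hj => [|j IH] hj.
    have d0 : (Ordinal hj, R 3) \in C.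
      by apply: inC; rewrite !inE; apply/orP; left; apply/eqP; congr pair; apply: val_inj.
    split => //.
    - by apply: (@nbr2 _ _ _ _ (Ordinal hj, R 2) (Ordinal hj, R 3)) => //;
      rewrite /necklace_adj /= ?xpair_eqE ?andbF ?eqxx ?modn_small ?eqxx ?orbT //.
    - by apply: (@nbr2 _ _ _ _ (Ordinal hj, R 2) (Ordinal hj, R 3)) => //;
      rewrite /necklace_adj /= ?xpair_eqE ?andbF ?eqxx ?modn_small ?eqxx ?orbT //.
  have [a0 _ _ _] := IH (ltnW hj).
  have b1 : (Ordinal hj, R 1) \in C.
    apply: (@nbr2 _ _ _ _ (Ordinal hj, R 2) (Ordinal (ltnW hj), R 0)) => //;
      rewrite /necklace_adj /= ?xpair_eqE ?andbF ?eqxx ?modn_small ?eqxx ?orbT //.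
  have d1 : (Ordinal hj, R 3) \in C.
    apply: (@nbr2 _ _ _ _ (Ordinal hj, R 1) (Ordinal hj, R 2)) => //;
      rewrite /necklace_adj /= ?xpair_eqE ?andbF ?eqxx ?modn_small ?eqxx ?orbT //.
  split => //.
  by apply: (@nbr2 _ _ _ _ (Ordinal hj, R 2) (Ordinal hj, R 3)) => //;
      rewrite /necklace_adj /= ?xpair_eqE ?andbF ?eqxx ?modn_small ?eqxx ?orbT //.
apply/eqP; apply/setP => -[[j hj] [p hp]]; rewrite inE.
have [a b c d] := key j hj.
have [p0|[p1|[p2|p3]]] : p = 0 \/ p = 1 \/ p = 2 \/ p = 3 by lia.
- by subst p; rewrite (_ : Ordinal hp = R 0) //; apply: val_inj.
- by subst p; rewrite (_ : Ordinal hp = R 1) //; apply: val_inj.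
- by subst p; rewrite (_ : Ordinal hp = R 2) //; apply: val_inj.
- by subst p; rewrite (_ : Ordinal hp = R 3) //; apply: val_inj.
Qed.

Lemma bigmin_le (I : eqType) (r : seq I) (P : pred I) (F : I -> nat) x j :
  j \in r -> P j -> \big[minn/x]_(i <- r | P i) F i <= F j.
Proof.
elim: r => // a r IH; rewrite inE big_cons => /orP[/eqP<-|jr] Pj.
  by rewrite Pj geq_minl.
case: (P a); last exact: IH.
exact: leq_trans (geq_minr _ _) (IH jr Pj).
Qed.

Theorem proposition4p1 (k : nat) (hk : 2 <= k) :
  m_perc (@necklace_adj k) 2 = k.+1.
Proof.
case: k hk => [|[|k]] // _.
have cardT : #|{: 'I_k.+2 * 'I_4}| = (k.+2 * 4)%N by rewrite card_prod !card_ord.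
rewrite /m_perc; apply/eqP; rewrite eqn_leq; apply/andP; split.
- apply: leq_trans (@bigmin_le _ _ _ _ _ _ (mem_index_enum _) (upper k)) _.
  rewrite cardsU1 inE /= (_ : #|[set x : 'I_k.+2 * 'I_4 | x.2 == R 2]| = k.+2) //.
  have -> : [set x : 'I_k.+2 * 'I_4 | x.2 == R 2] = setX [set: 'I_k.+2] [set R 2].
    by apply/setP => -[i p]; rewrite !inE.
  by rewrite cardsX cardsT cards1 card_ord muln1.
- apply: (big_ind (fun x => k.+3 <= x)).
  + by rewrite cardT; lia.
  + by move=> x y hx hy; rewrite leq_min hx hy.
  move=> S perc.
  case: (boolP [exists u, u \notin S]) => [/existsP [u uS]|].
    have := @lower _ _ (@nadj_sym k.+2) (@ndeg k.+1) S perc (ex_intro _ u uS).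
    rewrite cardT; lia.
  rewrite negb_exists => /forallP h.
  have -> : S = setT by apply/setP => v; have := h v; rewrite negbK inE.
  by rewrite cardsT cardT; lia.
Qed.
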